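(* There are only finitely many positive integers $n$ for which $\left\lfloor n^{30}/1116 \right\rfloor$ is prime. *)

(* Defs.v *)
From mathcomp Require Import all_boot.

(* Main.v *)
Require Import Defs.
From mathcomp Require Import all_boot zify.

Lemma sq8 n : odd n -> n ^ 2 %% 8 = 1.
Proof.
move=> ho; rewrite -modnXm.
have hb : n %% 8 < 8 by rewrite ltn_pmod.
have hm : (n %% 8) %% 2 = 1 by have := modn2 n; rewrite ho; lia.
move: (n %% 8) hb hm => b.
by case: b => [|[|[|[|[|[|[|[|b]]]]]]]].
Qed.

Lemma x8odd n : odd n -> n ^ 30 %% 8 = 1.
Proof.
move=> ho; rewrite (_ : 30 = 2 * 15) // expnM -modnXm sq8 // exp1n.

Qed.

Lemma x8even n : ~~ odd n -> n ^ 30 %% 8 = 0.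
Proof.
move=> he; apply/eqP; rewrite -/(dvdn 8 _).
have h2 : 2 %| n by rewrite dvdn2.
apply: (dvdn_trans (_ : 2 ^ 3 %| 2 ^ 30)); first exact: dvdn_exp2l.
exact: dvdn_exp2r.
Qed.

Lemma sq9 n : ~~ (3 %| n) -> n ^ 2 %% 9 \in [:: 1; 4; 7].
Proof.
move=> h3; rewrite -modnXm.
have hb : n %% 9 < 9 by rewrite ltn_pmod.
have hm : (n %% 9) %% 3 != 0 by move: h3; rewrite /dvdn; lia.
move: (n %% 9) hb hm => b.
by case: b => [|[|[|[|[|[|[|[|[|b]]]]]]]]].
Qed.

Lemma x9 n : ~~ (3 %| n) -> n ^ 30 %% 9 = 1.
Proof.
move=> h3; rewrite (_ : 30 = (2 * 3) * 5) // !expnM.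
rewrite -modnXm -(modnXm 3) .
have := sq9 n h3; move: (n ^ 2 %% 9) => c.
by rewrite !inE => /or3P [] /eqP ->.
Qed.

Lemma x27 n : 3 %| n -> n ^ 30 %% 27 = 0.
Proof.
move=> h; apply/eqP; rewrite -/(dvdn 27 _).
apply: (dvdn_trans (_ : 3 ^ 3 %| 3 ^ 30)); first exact: dvdn_exp2l.
exact: dvdn_exp2r.
Qed.

Lemma x31a n : 31 %| n -> n ^ 30 %% 31 = 0.
Proof.
move=> h; apply/eqP; rewrite -/(dvdn 31 _).
by rewrite (dvdn_trans h) // dvdn_exp.
Qed.

Lemma x31b n : ~~ (31 %| n) -> n ^ 30 %% 31 = 1.
Proof.
move=> h.
have n0 : 0 < n by case: n h.
have hp : prime 31 by [].
have hf := fermat_little n hp.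
have hx : 1 <= n ^ 30 by rewrite expn_gt0 n0.
have : 31 %| (n ^ 30 - 1) * n.
  rewrite mulnBl mul1n -expnSr -eqn_mod_dvd; first by apply/eqP.
  by rewrite expnS leq_pmulr // expn_gt0 n0.
rewrite Gauss_dvdl; last by rewrite prime_coprime.
rewrite -eqn_mod_dvd // => /eqP ->. by [].
Qed.

Lemma small_div q d : prime q -> 4 <= q -> d %| q -> 1 < d < 4 -> False.
Proof.
move=> /primeP [_ hp] h4 hd hd2.
have := hp d hd; rewrite /= => /orP [] /eqP; lia.
Qed.

Theorem theorem8 :
  exists N : nat, forall n : nat, 0 < n -> prime (n ^ 30 %/ 1116) -> n <= N.
Proof.
exists 1 => n n0 pq; rewrite leqNgt; apply/negP => n2.
have h15 : 1200 <= n ^ 15.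
  by apply: (@leq_trans (2 ^ 15)) => //; rewrite leq_exp2r.
have hx : n ^ 30 = n ^ 15 * n ^ 15 by rewrite -expnD.
have hq4 : 4 <= n ^ 30 %/ 1116 by rewrite hx; nia.
case: (boolP (odd n)) => ho; [have h8 := x8odd n ho | have h8 := x8even n ho];
case: (boolP (3 %| n)) => h3; [have h9 := x27 n h3 | have h9 := x9 n h3 | have h9 := x27 n h3 | have h9 := x9 n h3];
case: (boolP (31 %| n)) => h31; [have h31' := x31a n h31 | have h31' := x31b n h31 | have h31' := x31a n h31 | have h31' := x31b n h31
  | have h31' := x31a n h31 | have h31' := x31b n h31 | have h31' := x31a n h31 | have h31' := x31b n h31].
all: try (apply: (small_div _ 3 pq hq4); [ | by []]; move: h8 h9 h31'; move: (n^30) => x; lia).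
all: try (apply: (small_div _ 2 pq hq4); [ | by []]; move: h8 h9 h31'; move: (n^30) => x; lia).
have he : n ^ 30 = 1116 * (n ^ 30 %/ 1116) + 900 by move: h8 h9 h31'; move: (n^30) => x; lia.
move: pq hq4 he; rewrite hx; move: (n ^ 15) h15 => y h15.
move: (y * y %/ 1116) => q pq hq4 he; clear -pq hq4 he h15.
have hf : 1116 * q = (y - 30) * (y + 30).
  have [z hz] : exists z, y = z + 30 by exists (y - 30); lia.
  rewrite hz addnK -addnA in he *; nia.
have : q %| (y - 30) * (y + 30) by rewrite -hf dvdn_mull.
rewrite Euclid_dvdM // => /orP [] /dvdnP [t ht].
- have hq0 : 0 < q by lia.
  have e2 : q * 1116 = q * (t * (y + 30)) by rewrite [LHS]mulnC hf ht (mulnC t) -mulnA.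
  move/eqP: e2; rewrite eqn_pmul2l // => /eqP e2; clear -e2 h15; case: t e2 => [|t] e2; nia.
- have hq0 : 0 < q by lia.
  have e2 : q * 1116 = q * (t * (y - 30)) by rewrite [LHS]mulnC hf ht [LHS]mulnC (mulnC t) -mulnA.
  move/eqP: e2; rewrite eqn_pmul2l // => /eqP e2.
  clear -e2 h15; case: t e2 => [|t] e2; nia.
Qed.
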